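(* Let $\xi_1=0$ and $\xi_{n+1}=\eta_{\xi_n}(\cos(2\pi/9))$ for $n\ge1$. Then the sequence $\{\xi_n\}_{n\ge1}$ is increasing (nondecreasing) in $n$, and its limit $\xi_\infty:=\lim_{n\to\infty}\xi_n$ satisfies $0.125\le\xi_\infty\le0.13$.
   Context: For $\xi\ge0$ and $y\in(0,1)$, $\eta_\xi(y)$ is the unique positive root $\delta$ of $(2+y)\delta^2+2(2+5y-(1+\xi)^2)\delta-4(1-y)(1+\xi)^2=0$, i.e. $\eta_\xi(y)=\frac{-2-5y+(1+\xi)^2+\sqrt{(2+5y-(1+\xi)^2)^2+4(2+y)(1-y)(1+\xi)^2}}{2+y}$. *)

(* Defs.v *)
From Stdlib Require Import Reals Lra.
Open Scope R_scope.

(* eta_xi(y): the unique positive root delta of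
   (2+y) d^2 + 2(2+5y-(1+xi)^2) d - 4(1-y)(1+xi)^2 = 0, given by the
   explicit formula from the paper. *)
Definition eta (xi y : R) : R :=
  (-2 - 5*y + (1+xi)^2
   + sqrt ((2 + 5*y - (1+xi)^2)^2 + 4*(2+y)*(1-y)*(1+xi)^2)) / (2 + y).

(* xi_1 = 0, xi_{n+1} = eta_{xi_n}(cos(2 pi/9)); indexed from 0: xi_seq 0 = xi_1. *)
Fixpoint xi_seq (n : nat) : R :=
  match n with
  | O => 0
  | S m => eta (xi_seq m) (cos (2*PI/9))
  end.

(* Main.v *)
Require Import Defs.
From Stdlib Require Import Reals Lra Psatz.
Open Scope R_scope.

Definition Q (c xi d : R) : R :=
  (2+c)*d^2 + 2*(2+5*c-(1+xi)^2)*d - 4*(1-c)*(1+xi)^2.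

Lemma eta_facts (c xi : R) : 0 < c < 1 -> 0 <= xi ->
  0 <= eta xi c /\ Q c xi (eta xi c) = 0 /\
  (forall d, 0 <= d -> 0 <= Q c xi d -> eta xi c <= d).
Proof.
  intros Hc Hxi. unfold eta, Q.
  set (B := 2 + 5*c - (1+xi)^2).
  set (D := (B)^2 + 4*(2+c)*(1-c)*(1+xi)^2).
  replace (-2 - 5*c + (1+xi)^2) with (-B) by (unfold B; ring).
  assert (HC : 0 < 4*(2+c)*(1-c)*(1+xi)^2).
  { assert (0 < (1+xi)^2) by nra. assert (0 < (2+c)*(1-c)) by nra. nra. }
  assert (HD : 0 <= D) by (unfold D; nra).
  set (s := sqrt D).
  assert (Hs2 : s*s = D) by (apply sqrt_sqrt; lra).
  assert (Hs0 : 0 <= s) by apply sqrt_pos.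
  assert (HsB : s > -B) by (unfold D in Hs2; nra).
  assert (HsB' : s >= B) by (unfold D in Hs2; nra).
  fold D. fold s.
  split; [| split].
  - apply Rmult_le_pos; [lra | left; apply Rinv_0_lt_compat; lra].
  - transitivity ((s*s - D)/(2+c)).
    + unfold D, B. field. lra.
    + rewrite Hs2. unfold Rdiv. ring.
  - intros d Hd HQ. fold B in HQ.
    apply (Rmult_le_reg_r (2+c)); [lra|]. unfold Rdiv. rewrite Rmult_assoc, Rinv_l; [|lra].
    rewrite Rmult_1_r.
    destruct (Rle_dec 0 ((2+c)*d + B)) as [Hp|Hn].
    + assert (((2+c)*d+B)^2 >= D) by (unfold D; nra).
      nra.
    + exfalso. assert (((2+c)*d+B)^2 >= D) by (unfold D; nra).
      unfold D in H. nra.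
Qed.
Lemma CVc (k : R) : Un_cv (fun _ => k) k.
Proof. intros e He. exists 0%nat. intros. unfold Rdist. rewrite Rminus_diag, Rabs_R0. lra. Qed.
Lemma CV_ext (u v : nat -> R) l : (forall n, u n = v n) -> Un_cv u l -> Un_cv v l.
Proof. intros H Hu e He. destruct (Hu e He) as [N HN]. exists N. intros. rewrite <- H. auto. Qed.
Lemma Qcv (c : R) a b la lb : Un_cv a la -> Un_cv b lb ->
  Un_cv (fun n => (2+c)*(b n*b n) + 2*(2+5*c)*b n - 2*((1+a n)*(1+a n))*b n - 4*(1-c)*((1+a n)*(1+a n)))
   ((2+c)*(lb*lb) + 2*(2+5*c)*lb - 2*((1+la)*(1+la))*lb - 4*(1-c)*((1+la)*(1+la))).
Proof.
  intros Ha Hb.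
  repeat first [apply CV_minus | apply CV_plus | apply CV_mult | apply CVc | assumption].
Qed.
Lemma c_bounds : 766044/1000000 <= cos (2*PI/9) <= 766045/1000000.
Proof.
  set (x := 2*PI/9).
  assert (Hp := PI_RGT_0).
  assert (Hg : 1/2 < cos x).
  { rewrite <- cos_PI3. apply cos_decreasing_1; unfold x; lra. }
  assert (H3 : cos (3*x) = -1/2).
  { replace (3*x) with (PI - PI/3) by (unfold x; field).
    rewrite Rtrigo_facts.cos_pi_minus, cos_PI3. lra. }
  assert (Ht : cos (3*x) = 4*(cos x)^3 - 3*cos x).
  { replace (3*x) with (2*x + x) by ring.
    rewrite cos_plus, cos_2a_cos, sin_2a.
    assert (Hs := sin2 x). unfold Rsqr in Hs. nra. }
  rewrite H3 in Ht. set (c := cos x) in *.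
  split.
  - destruct (Rle_dec (766044/1000000) c); [lra|].
    exfalso. nra.
  - destruct (Rle_dec c (766045/1000000)); [lra|].
    exfalso. nra.
Qed.

Section Main.
Let c := cos (2*PI/9).
Lemma hc : 766044/1000000 <= c <= 766045/1000000.
Proof. apply c_bounds. Qed.

Lemma mono x y : 0 <= x <= y -> eta x c <= eta y c.
Proof.
  intros Hxy. assert (Hc := hc).
  destruct (eta_facts c y ltac:(lra) ltac:(lra)) as [H0 [HQ _]].
  destruct (eta_facts c x ltac:(lra) ltac:(lra)) as [_ [_ Hle]].
  apply Hle; [lra|]. unfold Q in *.
  set (e := eta y c) in *.
  assert (((1+y)^2-(1+x)^2)*(2*e+4*(1-c)) >= 0).
  { apply Rle_ge, Rmult_le_pos; nra. }
  nra.
Qed.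

Lemma top : eta (13/100) c <= 13/100.
Proof.
  assert (Hc := hc).
  destruct (eta_facts c (13/100) ltac:(lra) ltac:(lra)) as [_ [_ Hle]].
  apply Hle; [lra|]. unfold Q. lra.
Qed.

Lemma seq_bounds n : 0 <= xi_seq n <= xi_seq (S n) /\ xi_seq (S n) <= 13/100.
Proof.
  assert (Hc := hc).
  induction n as [|n IH].
  - simpl. fold c.
    destruct (eta_facts c 0 ltac:(lra) ltac:(lra)) as [H0 _].
    assert (eta 0 c <= eta (13/100) c) by (apply mono; lra).
    assert (Ht := top). lra.
  - destruct IH as [[H1 H2] H3].
    assert (E1 : xi_seq (S n) = eta (xi_seq n) c) by reflexivity.
    assert (E2 : xi_seq (S (S n)) = eta (xi_seq (S n)) c) by reflexivity.
    assert (eta (xi_seq n) c <= eta (xi_seq (S n)) c) by (apply mono; lra).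
    assert (eta (xi_seq (S n)) c <= eta (13/100) c) by (apply mono; lra).
    assert (Ht := top). rewrite E2. lra.
Qed.
End Main.

Theorem lemma4p6 :
  (forall n : nat, xi_seq n <= xi_seq (S n)) /\
  exists l : R, Un_cv xi_seq l /\ 1/8 <= l <= 13/100.
Proof.
  assert (Hc := hc). set (c := cos (2*PI/9)) in *.
  split; [intro n; apply seq_bounds|].
  destruct (growing_cv xi_seq) as [l Hl].
  - intro n. apply seq_bounds.
  - exists (13/100). intros x [n ->]. destruct n; [simpl; lra|]. apply seq_bounds.
  - exists l. split; [exact Hl|].
    assert (Hl1 : Un_cv (fun n => xi_seq (S n)) l).
    { intros e He. destruct (Hl e He) as [N HN]. exists N. intros. apply HN. lia. }
    assert (Hub : l <= 13/100).
    { apply (Rle_cv_lim (Un := fun n => xi_seq (S n)) (Vn := fun _ => 13/100)); auto.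
      - intro n. apply seq_bounds.
      - apply CVc. }
    assert (Hlb : 0 <= l).
    { apply (Rle_cv_lim (Un := fun _ => 0) (Vn := xi_seq)); auto.
      - intro n. destruct n; [simpl; lra|]. pose proof (seq_bounds n). lra.
      - apply CVc. }
    assert (HQ := Qcv c xi_seq (fun n => xi_seq (S n)) l l Hl Hl1).
    assert (HQ0 : Un_cv (fun _ => 0) ((2+c)*(l*l) + 2*(2+5*c)*l - 2*((1+l)*(1+l))*l - 4*(1-c)*((1+l)*(1+l)))).
    { eapply CV_ext; [|exact HQ]. intro n. simpl.
      destruct (eta_facts c (xi_seq n) ltac:(lra) ltac:(pose proof (seq_bounds n); lra)) as [_ [HQn _]].
      unfold Q in HQn. fold c. nra. }
    assert (Hz := UL_sequence _ _ _ HQ0 (CVc 0)).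
    split; [|exact Hub].
    destruct (Rle_dec (1/8) l); [lra|]. exfalso.
    set (cu := 766045/1000000) in *.
    assert (Hd : (2+c)*(l*l) + 2*(2+5*c)*l - 2*((1+l)*(1+l))*l - 4*(1-c)*((1+l)*(1+l))
      - ((2+cu)*(l*l) + 2*(2+5*cu)*l - 2*((1+l)*(1+l))*l - 4*(1-cu)*((1+l)*(1+l)))
      = (c - cu)*(l*l + 10*l + 4*((1+l)*(1+l)))) by ring.
    assert (0 <= (cu - c)*(l*l + 10*l + 4*((1+l)*(1+l)))) by (apply Rmult_le_pos; nra).
    assert (0 <= (1/8 - l)*l) by nra.
    assert (0 <= (1/8 - l)*l*l) by nra.
    unfold cu in *. nra.
Qed.
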